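(* Let $C_2\subseteq C_1\subseteq\mathbb{F}_2^n$ be linear codes, $Q=Q(C_1,C_2)$ the corresponding CSS code, and $N=2^\ell$ with $\ell$ a positive integer. If $(1,\ldots,1)\in H_N$, then $C_2\subseteq (C_1^{\ell-1})^{\perp}$.
   Context: $\omega=e^{2\pi\mathbf{i}/N}$, $U(a)=\mathrm{diag}(1,\omega^a)$ for $a\in\mathbb{Z}_N$, $U(b)=\bigotimes_{i=1}^nU(b_i)$ for $b\in\mathbb{Z}_N^n$. $Q(C_1,C_2)$ is the subspace of $(\mathbb{C}^2)^{\otimes n}$ stabilized by all $X(u)Z(v)$, $u\in C_2$, $v\in C_1^\perp$ (Pauli operators $X(u)=\bigotimes X^{u_i}$, $Z(v)=\bigotimes Z^{v_i}$). $H_N=\{b\in\mathbb{Z}_N^n: U(b)Q=Q\}$. For $r\ge1$, $C_1^r=C_1\star\cdots\star C_1$ ($r$ times) is the $\mathbb{F}_2$-linear span of the componentwise products $c_1\star\cdots\star c_r$ with $c_i\in C_1$, and $C_1^0$ is the span of $(1,\ldots,1)$; $\perp$ is the dual over $\mathbb{F}_2$ with respect to the standard dot product. *)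

(* Defs.v *)
From HB Require Import structures.
From mathcomp Require Import all_boot all_order all_algebra.
From mathcomp Require Import algC.
Set Implicit Arguments. Unset Strict Implicit. Unset Printing Implicit Defensive.
Import Order.TTheory GRing.Theory Num.Theory.
Local Open Scope ring_scope.

Notation word n := 'rV['F_2]_n.

Definition dotF2 n (x y : word n) : 'F_2 := \sum_(i < n) x 0 i * y 0 i.

Definition dual n (C : {vspace word n}) : pred (word n) :=
  [pred v | [forall w : word n, (w \in C) ==> (dotF2 w v == 0)]].

(* Componentwise product c_1 * ... * c_r of a family of r words
   (for r = 0 this is the all-ones word). *)
Definition starprod n r (c : {ffun 'I_r -> word n}) : word n :=
  \row_(j < n) \prod_(i < r) c i 0 j.

Definition starpow n (C : {vspace word n}) (r : nat) : {vspace word n} :=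
  if r is 0 then <[\row_(j < n) (1%R : 'F_2)]>%VS
  else <<[seq starprod c | c <- enum [set c : {ffun 'I_r -> word n} |
                                        [forall i, c i \in C]]]>>%VS.

(* States of n qubits: functions from computational basis labels to C
   (algC = algebraic complex numbers); psi x = <x|psi>. *)
Definition state n := {ffun word n -> algC}.

Definition bit (a : 'F_2) : nat := nat_of_ord a.

(* Pauli X(u): |x> -> |x+u>;  Z(v): |x> -> (-1)^{v.x} |x>. *)
Definition PauliX n (u : word n) (psi : state n) : state n :=
  [ffun x => psi (x + u)].
Definition PauliZ n (v : word n) (psi : state n) : state n :=
  [ffun x => (-1) ^+ bit (dotF2 v x) * psi x].

Definition CSS n (C1 C2 : {vspace word n}) (psi : state n) : Prop :=
  forall u v : word n, u \in C2 -> v \in dual C1 ->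
    PauliX u (PauliZ v psi) = psi.

(* omega = e^{2 pi i / N}: N.-root (-1) is e^{i pi / N} (minimal argument). *)
Definition omega (N : nat) : algC := (N.-root (-1)) ^+ 2.

(* U(b) = (x) diag(1, omega^{b_i}), b in Z_N^n. *)
Definition Udiag (N : nat) n (b : 'rV['Z_N]_n) (psi : state n) : state n :=
  [ffun x : word n => (\prod_(i < n) omega N ^+ (nat_of_ord (b 0 i) * bit (x 0 i))) * psi x].

(* H_N = { b in Z_N^n : U(b) Q = Q } (image of Q under U(b) equals Q). *)
Definition H_N (N : nat) n (C1 C2 : {vspace word n}) (b : 'rV['Z_N]_n) : Prop :=
  (forall psi, CSS C1 C2 psi -> CSS C1 C2 (Udiag b psi)) /\
  (forall phi, CSS C1 C2 phi -> exists2 psi, CSS C1 C2 psi & phi = Udiag b psi).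

(* Main.v *)
Require Import Defs.
From HB Require Import structures.
From mathcomp Require Import all_boot all_order all_algebra.
From mathcomp Require Import algC.
Import GRing.Theory Num.Theory.
Local Open Scope ring_scope.
Set Implicit Arguments. Unset Strict Implicit.

Lemma bitD2 (a b : 'F_2) : (bit (a + b)%R + 2 * bit (a * b)%R = bit a + bit b)%N.
Proof. by case: a => [[|[|[]]]] //= ?; case: b => [[|[|[]]]] //= ?. Qed.
Lemma bit_nat (x : 'F_2) : x = (bit x)%:R.
Proof. by case: x => [[|[|[]]]] //= ?; apply/val_inj. Qed.
Lemma F2_nat0 k : ((k%:R : 'F_2) == 0) = (2 %| k)%N.
Proof. rewrite -Fp_nat_mod // /dvdn modn2; by case: (odd k). Qed.
Lemma bit0 : bit (0 : 'F_2) = 0%N. Proof. by []. Qed.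
Lemma F2_sq (x : 'F_2) : x * x = x.
Proof. by case: x => [[|[|[]]]] //= ?; apply/val_inj. Qed.
Lemma one_val N : nat_of_ord (1 : 'Z_N) = 1%N.
Proof. by rewrite /= modn_small. Qed.
Definition wt n (w : word n) : nat := (\sum_(i < n) bit (w 0%R i))%N.
Definition star n (a b : word n) : word n := \row_j (a 0 j * b 0 j).
Arguments wt {n} w%_R.
Arguments star {n} a b.

Lemma wtD n (a b : word n) : (wt (a + b) + 2 * wt (star a b) = wt a + wt b)%N.
Proof.
rewrite /wt big_distrr -!big_split /=; apply: eq_bigr => i _.
by rewrite !mxE bitD2.
Qed.

Lemma wt0 n : wt (0 : word n) = 0%N.
Proof. by rewrite /wt big1 // => i _; rewrite mxE. Qed.

Lemma dotF2_wt n (a b : word n) : dotF2 a b = (wt (star a b))%:R.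
Proof.
rewrite /dotF2 /wt natr_sum; apply: eq_bigr => i _.
by rewrite mxE -bit_nat.
Qed.

Lemma dotF2C n (a b : word n) : dotF2 a b = dotF2 b a.
Proof. by apply: eq_bigr => i _; rewrite mulrC. Qed.

Lemma dotF2_mx n (a b : word n) : dotF2 a b = (a *m b^T) 0 0.
Proof. by rewrite mxE; apply: eq_bigr => i _; rewrite mxE. Qed.

Lemma dotF2_0 n (a : word n) : dotF2 a 0 = 0.
Proof. by rewrite dotF2_mx trmx0 mulmx0 mxE. Qed.

Lemma starDr n (a x c : word n) : star a (x + c) = star a x + star a c.
Proof. by apply/rowP => j; rewrite !mxE mulrDr. Qed.

Lemma star_AC n (a x c : word n) : star (star a x) (star a c) = star (star a c) x.
Proof.
apply/rowP => j; rewrite !mxE.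
rewrite mulrCA !mulrA F2_sq. by rewrite -!mulrA [x 0 j * _]mulrC.
Qed.

Lemma half_dvd k y : (2 ^ k %| 2 * y)%N -> (2 ^ k.-1 %| y)%N.
Proof.
case: k => [|k]; first by rewrite expn0 dvd1n.
by rewrite expnS dvdn_pmul2l.
Qed.

Definition good n (C1 : {vspace word n}) (k : nat) (a : word n) :=
  forall x, x \in C1 -> (2 ^ k %| wt (star a x))%N.

Arguments good {n} C1 k a.
Lemma good_step n (C1 : {vspace word n}) k (a c : word n) :
  good C1 k a -> c \in C1 -> good C1 k.-1 (star a c).
Proof.
move=> ga cC x xC; apply: half_dvd.
have := wtD (star a x) (star a c); rewrite -starDr star_AC => E.
have h1 := ga _ xC; have h2 := ga _ cC; have h3 := ga _ (memvD xC cC).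
have : (2 ^ k %| wt (star a (x + c)) + 2 * wt (star (star a c) x))%N.
  by rewrite E dvdn_add.
by rewrite dvdn_addr.
Qed.

Lemma good_prod n (C1 : {vspace word n}) k (u : word n) r (c : 'I_r -> word n) :
  good C1 k u -> (forall i, c i \in C1) ->
  good C1 (k - r) (\row_j (u 0 j * \prod_(i < r) c i 0 j)).
Proof.
move=> gu; elim: r c => [|r IH] c cC.
  have -> : \row_j (u 0 j * \prod_(i < 0) c i 0 j) = u.
    by apply/rowP => j; rewrite mxE big_ord0 mulr1.
  by rewrite subn0.
have -> : \row_j (u 0 j * \prod_(i < r.+1) c i 0 j) =
  star (\row_j (u 0 j * \prod_(i < r) c (widen_ord (leqnSn r) i) 0 j)) (c ord_max).
  by apply/rowP => j; rewrite !mxE big_ord_recr /= mulrA.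
rewrite subnS; apply: good_step => //; exact: IH.
Qed.

Lemma dotF2_sum n I (r : seq I) (a : I -> 'F_2) (g : I -> word n) (u : word n) :
  dotF2 (\sum_(i <- r) a i *: g i) u = \sum_(i <- r) a i * dotF2 (g i) u.
Proof.
rewrite dotF2_mx mulmx_suml summxE; apply: eq_bigr => i _.
by rewrite -scalemxAl mxE dotF2_mx.
Qed.

Lemma comb n l (C1 C2 : {vspace word n}) :
  (C2 <= C1)%VS -> (0 < l)%N ->
  (forall x u, x \in C1 -> u \in C2 -> wt (x + u) = wt x %[mod 2 ^ l]) ->
  forall u, u \in C2 -> u \in dual (starpow C1 l.-1).
Proof.
move=> sC lgt0 hyp u uC.
have hu0 : (2 ^ l %| wt u)%N.
  by have := hyp 0 u (mem0v _) uC; rewrite add0r wt0 mod0n => /eqP; rewrite -/(dvdn _ _).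
have gu : good C1 l.-1 u.
  move=> x xC; apply: half_dvd.
  have := wtD x u => E.
  have : (wt x + 2 * wt (star x u) == wt x + wt u %[mod 2 ^ l])%N.
    by rewrite -E eqn_modDr eq_sym; apply/eqP; apply: hyp.
  rewrite eqn_modDl => /eqP H.
  have -> : star u x = star x u by apply/rowP => j; rewrite !mxE mulrC.
  by rewrite /dvdn H; exact: hu0.
apply/forallP => w; apply/implyP => wS.
case: l lgt0 hyp hu0 gu wS => [|[|j]] // _ _ hu0 gu.
  move=> /vlineP [k ->].
  rewrite dotF2_mx -scalemxAl mxE -dotF2_mx dotF2_wt.
  have -> : star (\row_(j < n) (1 : 'F_2)) u = u by apply/rowP => j; rewrite !mxE mul1r.
  by rewrite (eqP (_ : (wt u)%:R == 0 :> 'F_2)) ?mulr0 // F2_nat0.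
rewrite /starpow /=; set X := [seq _ | _ <- _]; move=> wS.
rewrite (coord_span (X := in_tuple X) wS) dotF2_sum big1 // => i _.
have : X`_i \in X by rewrite mem_nth.
case/mapP => c; rewrite mem_enum inE => /forallP cC ->.
set c' := fun i : 'I_j => c (widen_ord (leqnSn j) i).
have := good_prod (c := c') gu (fun i => cC _) (cC ord_max).
rewrite subSn // subnn expn1 => H2.
rewrite dotF2_wt.
have -> : star (starprod c) u =
  star (\row_j0 (u 0 j0 * \prod_(i0 < j) c' i0 0 j0)) (c ord_max).
  by apply/rowP => j0; rewrite !mxE big_ord_recr /= mulrC mulrA.
by rewrite (eqP (_ : _%:R == 0 :> 'F_2)) ?mulr0 // F2_nat0.
Qed.

Lemma neg1_neq1 : (-1 : algC) != 1.
Proof.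
rewrite -subr_eq0 -opprD oppr_eq0 (_ : 1 + 1 = 2%:R) //.
by rewrite pnatr_eq0.
Qed.

Lemma omega_prim l : (0 < l)%N -> (2 ^ l).-primitive_root (omega (2 ^ l)).
Proof.
move=> lgt0; set N := (2 ^ l)%N.
have N0 : (0 < N)%N by rewrite expn_gt0.
set r := N.-root (-1 : algC).
have rN : r ^+ N = -1 by rewrite /r rootCK.
have r2N : r ^+ (N * 2) = 1 by rewrite exprM rN expr2 mulN1r opprK.
have N20 : (0 < N * 2)%N by rewrite muln_gt0 N0.
have [m pm mdvd] := prim_order_exists N20 r2N.
have E : (N * 2 = 2 ^ l.+1)%N by rewrite expnSr.
have mE : m = (N * 2)%N.
  move: mdvd; rewrite E.
  case/(dvdn_pfactor _ _ (isT : prime 2)) => e; rewrite leq_eqVlt => /orP [/eqP -> ->|] //.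
  rewrite ltnS => le mE; exfalso.
  have : (m %| N)%N by rewrite mE dvdn_exp2l.
  by rewrite (prim_order_dvd pm) rN (negPf neg1_neq1).
rewrite mE in pm.
have := dvdn_prim_root pm (dvdn_mulr 2 (dvdnn N)).
by rewrite mulKn.
Qed.

Lemma quantum n l (C1 C2 : {vspace word n}) :
  (C2 <= C1)%VS -> (0 < l)%N ->
  H_N C1 C2 (const_mx 1 : 'rV['Z_(2 ^ l)]_n) ->
  forall x u, x \in C1 -> u \in C2 -> wt (x + u) = wt x %[mod 2 ^ l].
Proof.
move=> sC lgt0 [H1 _] x u xC uC.
pose psi : state n := [ffun y => if (y - x) \in C2 then 1 else 0].
have Cpsi : CSS C1 C2 psi.
  move=> u' v u'C vD; apply/ffunP => y; rewrite !ffunE.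
  have -> : y + u' - x = (y - x) + u' by rewrite addrAC.
  rewrite (rpredDr _ u'C).
  case: ifP => yx; last by rewrite mulr0.
  have : y + u' \in C1.
    have -> : y + u' = (y - x + u') + x by rewrite addrAC subrK.
    by rewrite rpredD // (subvP sC) // rpredD.
  move=> yC; move/forallP: vD => /(_ (y + u')) /implyP /(_ yC) /eqP.
  by rewrite dotF2C => ->; rewrite mulr1 expr0.
have := H1 _ Cpsi u 0 uC.
have -> : (0 : word n) \in dual C1.
  by apply/forallP => w; apply/implyP => _; rewrite dotF2_0.
move=> /(_ isT) /ffunP /(_ x); rewrite !ffunE dotF2C dotF2_0 expr0 mul1r.
have Ue : forall y : word n, \prod_(i < n) omega (2 ^ l) ^+ (muln (nat_of_ord ((const_mx 1 : 'rV['Z_(2 ^ l)]_n) 0 i)) (bit (y 0 i))) = omega (2 ^ l) ^+ wt y.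
  by move=> y; rewrite prodrXr; congr (_ ^+ _); apply: eq_bigr => i _; rewrite mxE one_val mul1n.
rewrite !Ue.
have -> : x + u - x = u by rewrite addrAC subrr add0r.
rewrite subrr mem0v uC !mulr1 => /eqP.
by rewrite (eq_prim_root_expr (omega_prim lgt0)) => /eqP.
Qed.

Unset Implicit Arguments.

Theorem corollary3p4 (n l : nat) (C1 C2 : {vspace 'rV['F_2]_n}) :
  (C2 <= C1)%VS -> (0 < l)%N ->
  H_N C1 C2 (const_mx 1 : 'rV['Z_(2 ^ l)]_n) ->
  forall u : 'rV['F_2]_n, u \in C2 -> u \in dual (starpow C1 l.-1).
Proof.
move=> sC lgt0 H; apply: comb => //; exact: quantum.
Qed.
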